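(* In any execution of Algorithm 1, no two correct processes mbrb-deliver different app-messages from a process $p_i$ with the same sequence number $sn$; i.e., if correct processes mbrb-deliver $(m,sn,i)$ and $(m',sn,i)$ respectively, then $m=m'$.
   Context: System model. There are $n$ asynchronous processes $p_1,\dots,p_n$ with distinct known identities. Up to $t$ are Byzantine (arbitrary behavior); the rest are correct; $c$ is the number of correct processes. The network is fully connected, asynchronous, never corrupts/duplicates/creates messages; ''broadcast $M$'' sends $M$ to all $n$ processes; a message adversary may suppress, per broadcast by a correct process, up to $d<c$ copies addressed to correct processes. Signatures are unforgeable (only $p_k$ can produce a valid signature by $p_k$) and public keys are known. It is assumed $n>3t+2d$. Algorithm 1 (code for $p_i$). Each process stores, for each triplet $(m,sn,j)$, a set of saved valid signatures of that triplet, at most one per signer. On $\mathrm{mbrb\_broadcast}(m,sn)$: $p_i$ saves its own signature of $(m,sn,i)$ and broadcasts $\mathrm{BUNDLE}(m,sn,i,S)$, $S$ the saved signatures for $(m,sn,i)$. On receiving $\mathrm{BUNDLE}(m,sn,j,sigs)$: if $p_i$ has not already mbrb-delivered some $(-,sn,j)$ and $sigs$ contains a valid signature of $(m,sn,j)$ by $p_j$, then: (1) save all new valid signatures of $(m,sn,j)$ in $sigs$; (2) if $p_i$ has not yet signed any $(-,sn,j)$, save its own signature of $(m,sn,j)$ and broadcast $\mathrm{BUNDLE}(m,sn,j,\text{all saved signatures for }(m,sn,j))$; (3) if strictly more than $\frac{n+t}{2}$ signatures for $(m,sn,j)$ are saved, broadcast $\mathrm{BUNDLE}(m,sn,j,\text{all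 saved signatures})$ and mbrb-deliver $(m,sn,j)$. A correct process never uses the same sequence number twice in mbrb-broadcast. *)

(* Defs.v *)
From mathcomp Require Import all_boot.
Set Implicit Arguments. Unset Strict Implicit. Unset Printing Implicit Defensive.

Section MBRB.
(* M : app-messages; n processes 'I_n; t : Byzantine bound used by the
   algorithm; d : message-adversary power; B : the actual set of Byzantine
   processes (correct = complement). *)
Variables (M : eqType) (n t d : nat) (B : {set 'I_n}).

Definition triplet := (M * nat * 'I_n)%type.
Definition tr_sn (x : triplet) : nat := x.1.2.
Definition tr_src (x : triplet) : 'I_n := x.2.

(* (k, x) : a signature of the triplet x by p_k (as it appears in a message;
   it may be forged, see [valid_sig]). *)
Definition signature := ('I_n * triplet)%type.

Definition bundle := (triplet * seq signature)%type.

(* network message: (sender, destination, content) *)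
Definition netmsg := ('I_n * 'I_n * bundle)%type.

Record lstate := LState {
  ls_saved : seq signature;
  ls_signed : seq triplet;
  ls_delivered : seq triplet;
  ls_used : seq nat             (* sequence numbers used in mbrb_broadcast *)
}.

Definition lstate0 := LState [::] [::] [::] [::].

Record config := Config {
  loc : 'I_n -> lstate;
  net : seq netmsg              (* messages sent but not yet received *)
}.

Definition config0 := Config (fun _ => lstate0) [::].

(* Unforgeability: a signature of x by p_k is valid iff p_k produced it:
   Byzantine processes can sign anything, a correct p_k only what it signed. *)
Definition valid_sig (C : config) (s : signature) : bool :=
  (s.1 \in B) || (s.2 \in ls_signed (loc C s.1)).

Definition saved_for (st : lstate) (x : triplet) : seq signature :=
  [seq s <- ls_saved st | s.2 == x].

Definition nsaved (st : lstate) (x : triplet) : nat :=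
  size (undup [seq s.1 | s <- saved_for st x]).

Definition delivered_sn (st : lstate) (sn : nat) (j : 'I_n) : bool :=
  has (fun y : triplet => (tr_sn y == sn) && (tr_src y == j)) (ls_delivered st).

Definition signed_sn (st : lstate) (sn : nat) (j : 'I_n) : bool :=
  has (fun y : triplet => (tr_sn y == sn) && (tr_src y == j)) (ls_signed st).

(* The message adversary may suppress at most d copies addressed to correct
   processes: D is the set of actual destinations of a broadcast. *)
Definition adv_ok (D : {set 'I_n}) : bool :=
  (B \subset D) && (#|~: D :\: B| <= d).

Definition bcast (i : 'I_n) (b : bundle) (D : {set 'I_n}) : seq netmsg :=
  [seq (i, k, b) | k <- enum D].

Definition save_own (i : 'I_n) (x : triplet) (st : lstate) : lstate :=
  LState (if (i, x) \in ls_saved st then ls_saved st else rcons (ls_saved st) (i, x))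
         (rcons (ls_signed st) x) (ls_delivered st) (ls_used st).

(* Reception of BUNDLE(x, sigs) by correct p_i in configuration C; D1, D2 are
   the destination sets of the (up to two) broadcasts of this step.
   Returns the new local state and the messages sent. *)
Definition receive (C : config) (i : 'I_n) (b : bundle) (D1 D2 : {set 'I_n})
  : lstate * seq netmsg :=
  let st := loc C i in
  let x := b.1 in
  let sigs := b.2 in
  if ~~ delivered_sn st (tr_sn x) (tr_src x)
     && ((tr_src x, x) \in sigs) && valid_sig C (tr_src x, x) then
    let new := [seq s <- undup sigs |
                 [&& s.2 == x, valid_sig C s & s \notin ls_saved st]] in
    let st1 := LState (ls_saved st ++ new) (ls_signed st)
                      (ls_delivered st) (ls_used st) in
    let (st2, out2) :=
      if ~~ signed_sn st1 (tr_sn x) (tr_src x) then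
        let st2 := save_own i x st1 in (st2, bcast i (x, saved_for st2 x) D1)
      else (st1, [::]) in
    if n + t < 2 * nsaved st2 x then
      (LState (ls_saved st2) (ls_signed st2) (rcons (ls_delivered st2) x)
              (ls_used st2),
       out2 ++ bcast i (x, saved_for st2 x) D2)
    else (st2, out2)
  else (st, [::]).

Definition upd (f : 'I_n -> lstate) (i : 'I_n) (st : lstate) : 'I_n -> lstate :=
  fun k => if k == i then st else f k.

Inductive step : config -> config -> Prop :=
| step_broadcast C i (m : M) sn D :
    i \notin B -> sn \notin ls_used (loc C i) -> adv_ok D ->
    let x : triplet := (m, sn, i) in
    let st := save_own i x (loc C i) in
    let st' := LState (ls_saved st) (ls_signed st) (ls_delivered st)
                      (rcons (ls_used st) sn) in
    step C (Config (upd (loc C) i st') (net C ++ bcast i (x, saved_for st' x) D))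
| step_receive C i src b n1 n2 D1 D2 :
    i \notin B -> net C = n1 ++ (src, i, b) :: n2 -> adv_ok D1 -> adv_ok D2 ->
    step C (Config (upd (loc C) i (receive C i b D1 D2).1)
                   (n1 ++ n2 ++ (receive C i b D1 D2).2))
| step_byz_send C k (out : seq netmsg) :
    k \in B -> all (fun msg : netmsg => msg.1.1 == k) out ->
    step C (Config (loc C) (net C ++ out))
| step_byz_receive C k src b n1 n2 :
    k \in B -> net C = n1 ++ (src, k, b) :: n2 ->
    step C (Config (loc C) (n1 ++ n2)).

Inductive reachable : config -> Prop :=
| reach_init : reachable config0
| reach_step C C' : reachable C -> step C C' -> reachable C'.

End MBRB.

(* Main.v *)
Require Import Defs.
From mathcomp Require Import all_boot.
From mathcomp Require Import zify.
Set Implicit Arguments. Unset Strict Implicit.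

Section P.
Variables (M : eqType) (n t d : nat) (B : {set 'I_n}).

Lemma nsaved_mono (st st' : lstate M n) x :
  {subset ls_saved st <= ls_saved st'} -> nsaved st x <= nsaved st' x.
Proof.
move=> Hs; rewrite /nsaved; apply: uniq_leq_size; first exact: undup_uniq.
move=> k; rewrite !mem_undup => /mapP [s]; rewrite /saved_for mem_filter.
case/andP=> H1 H2 ->; apply/mapP; exists s => //; rewrite mem_filter H1 /=.
exact: Hs.
Qed.

Lemma receive_spec (C : config M n) i b D1 D2 :
  let st := loc C i in let st' := (receive t B C i b D1 D2).1 in let x := b.1 in
  [/\ ls_used st' = ls_used st,
     {subset ls_saved st <= ls_saved st'},
     (forall s, s \in ls_saved st' -> [|| s \in ls_saved st, valid_sig B C s | (s == (i,x)) && (x \in ls_signed st')]),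
     (ls_signed st' = ls_signed st \/ [/\ ~~ signed_sn st (tr_sn x) (tr_src x), valid_sig B C (tr_src x, x) & ls_signed st' = rcons (ls_signed st) x]) &
     (forall y, y \in ls_delivered st' -> y \in ls_delivered st \/ (y = x /\ n + t < 2 * nsaved st' x))].
Proof.
rewrite /receive /=.
case: ifP => [/andP[/andP[Hnd Hin] Hv] | _]; last first.
  split => //; [by move=> s ->| by left| by move=> y; left].
set new := filter _ _.
have Hnew : forall s, s \in new -> valid_sig B C s.
  by move=> s; rewrite mem_filter => /andP[/and3P[_ -> _] _].
case: ifP => Hs; rewrite /save_own /=.
- case E: ((i, b.1) \in ls_saved (loc C i) ++ new) => /=;
  case: ifP => Hq /=; split => //.
  + by move=> s Hm; rewrite mem_cat Hm.
  + move=> s; rewrite mem_cat => /orP[->//|/Hnew->]; by rewrite orbT.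
  + by right; split.
  + by move=> y; rewrite mem_rcons inE => /orP [/eqP ->|]; [right|left].
  + by move=> s Hm; rewrite mem_cat Hm.
  + move=> s; rewrite mem_cat => /orP[->//|/Hnew->]; by rewrite orbT.
  + by right; split.
  + by move=> y ->; left.
  + by move=> s Hm; rewrite mem_rcons inE mem_cat Hm orbT.
  + move=> s; rewrite mem_rcons inE mem_cat => /orP[/eqP->|/orP[->//|/Hnew->]].
      by rewrite eqxx mem_rcons inE eqxx !orbT.
    by rewrite orbT.
  + by right; split.
  + by move=> y; rewrite mem_rcons inE => /orP [/eqP ->|]; [right|left].
  + by move=> s Hm; rewrite mem_rcons inE mem_cat Hm orbT.
  + move=> s; rewrite mem_rcons inE mem_cat => /orP[/eqP->|/orP[->//|/Hnew->]].
      by rewrite eqxx mem_rcons inE eqxx !orbT.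
    by rewrite orbT.
  + by right; split.
  + by move=> y ->; left.
- case: ifP => Hq /=; split => //.
  + by move=> s Hm; rewrite mem_cat Hm.
  + move=> s; rewrite mem_cat => /orP[->//|/Hnew->]; by rewrite orbT.
  + by left.
  + by move=> y; rewrite mem_rcons inE => /orP [/eqP ->|]; [right|left].
  + by move=> s Hm; rewrite mem_cat Hm.
  + move=> s; rewrite mem_cat => /orP[->//|/Hnew->]; by rewrite orbT.
  + by left.
  + by move=> y ->; left.
Qed.

Definition Inv (C : config M n) : Prop :=
  [/\ (forall a s, a \notin B -> s \in ls_saved (loc C a) -> s.1 \notin B ->
                   s.2 \in ls_signed (loc C s.1)),
      (forall k y, k \notin B -> y \in ls_signed (loc C k) -> tr_src y = k ->
                   tr_sn y \in ls_used (loc C k)),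
      (forall k x y, k \notin B -> x \in ls_signed (loc C k) -> y \in ls_signed (loc C k) ->
                   tr_sn x = tr_sn y -> tr_src x = tr_src y -> x = y) &
      (forall a x, a \notin B -> x \in ls_delivered (loc C a) -> n + t < 2 * nsaved (loc C a) x)].

Lemma Inv0 : Inv (config0 M n).
Proof. by split. Qed.

Lemma upd_eq (f : 'I_n -> lstate M n) i st k :
  upd f i st k = if k == i then st else f k.
Proof. by []. Qed.

Lemma signed_sn_mem (st : lstate M n) y :
  y \in ls_signed st -> signed_sn st (tr_sn y) (tr_src y).
Proof. by move=> Hy; apply/hasP; exists y => //; rewrite !eqxx. Qed.

Lemma Inv_step C0 C1 : Inv C0 -> step t d B C0 C1 -> Inv C1.
Proof.
move=> HI Hst; move: HI; case: Hst.
- move=> C i m sn D HiB Hsn _ x st st' [I1 I2 I3 I4].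
  rewrite /st' /st /= {st' st}.
  set S := upd _ _ _.
  have Ssigned k y : y \in ls_signed (S k) = (y \in ls_signed (loc C k)) || ((k == i) && (y == x)).
    rewrite /S /upd; case: eqP => [->|] /=; last by rewrite orbF.
    by rewrite mem_rcons inE orbC.
  have Ssaved a s : s \in ls_saved (S a) -> (s \in ls_saved (loc C a)) || ((a == i) && (s == (i, x))).
    rewrite /S /upd; case: eqP => [->|] /=; last by move=> _ ->.
    case: ifP => _; first by move=> ->.
    by rewrite mem_rcons inE orbC.
  have Ssaved_sub a : {subset ls_saved (loc C a) <= ls_saved (S a)}.
    move=> s; rewrite /S /upd; case: eqP => [->|] //=.
    by case: ifP => // _ Hs; rewrite mem_rcons inE Hs orbT.
  have Sused k z : z \in ls_used (S k) = (z \in ls_used (loc C k)) || ((k == i) && (z == sn)).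
    rewrite /S /upd; case: eqP => [->|] /=; last by rewrite orbF.
    by rewrite mem_rcons inE orbC.
  have Sdel k : ls_delivered (S k) = ls_delivered (loc C k).
    by rewrite /S /upd; case: eqP => [->|].
  split.
  + move=> a s Ha /Ssaved /orP [Hs|/andP[/eqP _ /eqP ->]] Hs1.
      by rewrite Ssigned (I1 _ _ Ha Hs Hs1).
    by rewrite Ssigned !eqxx orbT.
  + move=> k y Hk; rewrite Ssigned Sused => /orP [Hy|/andP[/eqP -> /eqP ->]] Hsrc.
      by rewrite (I2 _ _ Hk Hy Hsrc).
    by rewrite !eqxx orbT.
  + move=> k x1 x2 Hk; rewrite !Ssigned.
    case/orP => [H1|/andP[/eqP Ek /eqP E1]]; case/orP => [H2|/andP[/eqP Ek' /eqP E2]].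
    * exact: I3 H1 H2.
    * subst; move=> Esn Esrc; have := I2 _ _ Hk H1.
      by rewrite Esrc => /(_ erefl); rewrite Esn /= (negbTE Hsn).
    * subst; move=> Esn Esrc; have := I2 _ _ Hk H2.
      by rewrite -Esrc => /(_ erefl); rewrite -Esn /= (negbTE Hsn).
    * by subst.
  + move=> a y Ha; rewrite Sdel => Hy.
    apply: leq_trans (I4 _ _ Ha Hy) _; rewrite leq_mul2l nsaved_mono //; exact: Ssaved_sub.
- move=> C i src b n1 n2 D1 D2 HiB _ _ _ [I1 I2 I3 I4] /=.
  have [Eu Ssub Ssav Ssig Sdel] := receive_spec C i b D1 D2.
  set st' := (receive t B C i b D1 D2).1 in Eu Ssub Ssav Ssig Sdel *.
  set x := b.1 in Ssav Ssig Sdel.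
  set S := upd _ _ _.
  have Si : S i = st' by rewrite /S /upd eqxx.
  have So k : k != i -> S k = loc C k by move=> /negbTE Hk; rewrite /S /upd Hk.
  have SsigSub k : {subset ls_signed (loc C k) <= ls_signed (S k)}.
    have [->|Hk] := eqVneq k i; last by rewrite So.
    rewrite Si; case: Ssig => [->|[_ _ ->]] // y Hy; by rewrite mem_rcons inE Hy orbT.
  rewrite /Inv /=; split.
  + move=> a s Ha; have [->|Hai] := eqVneq a i; last first.
      by rewrite So // => Hs Hs1; apply: SsigSub; exact: I1 Hs Hs1.
    rewrite Si => /Ssav /or3P [Hs|Hv|/andP[/eqP -> Hx]] Hs1.
    * by apply: SsigSub; exact: I1 Hs Hs1.
    * by apply: SsigSub; move: Hv; rewrite /valid_sig (negbTE Hs1).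
    * by rewrite /= Si.
  + move=> k y Hk; have [->|Hki] := eqVneq k i; last first.
      by rewrite !So //; exact: I2.
    rewrite !Si Eu; case: Ssig => [->|[Hns Hv ->]]; first exact: I2.
    rewrite mem_rcons inE => /orP [/eqP Ey|Hy]; last exact: I2.
    move=> Hsrc; move: Hv; rewrite /valid_sig -Ey Hsrc (negbTE HiB) /= => Hv.
    by move: Hns; rewrite -Ey (signed_sn_mem Hv).
  + move=> k x1 x2 Hk; have [->|Hki] := eqVneq k i; last first.
      by rewrite !So //; exact: I3.
    rewrite !Si; case: Ssig => [->|[Hns Hv ->]]; first exact: I3.
    rewrite !mem_rcons !inE.
    case/orP => [/eqP E1|H1]; case/orP => [/eqP E2|H2].
    * by rewrite E1 E2.
    * move=> Esn Esrc; move: Hns; rewrite -E1 Esn Esrc.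
      by rewrite (signed_sn_mem H2).
    * move=> Esn Esrc; move: Hns; rewrite -E2 -Esn -Esrc.
      by rewrite (signed_sn_mem H1).
    * exact: (I3 _ _ _ HiB H1 H2).
  + move=> a y Ha; have [->|Hai] := eqVneq a i; last first.
      by rewrite !So //; exact: I4.
    rewrite !Si => /Sdel [Hy|[-> Hq]] //.
    apply: leq_trans (I4 _ _ HiB Hy) _; rewrite leq_mul2l nsaved_mono //; exact: Ssub.
- by move=> C k out _ _ [].
- by move=> C k src b n1 n2 _ _ [].
Qed.

Lemma Inv_reach C : reachable t d B C -> Inv C.
Proof. elim => [|C1 C2 _ IH Hs]; [exact: Inv0 | exact: Inv_step IH Hs]. Qed.
Lemma signer_signed (C : config M n) a k x :
  Inv C -> a \notin B -> k \notin B ->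
  k \in undup [seq s.1 | s <- saved_for (loc C a) x] -> x \in ls_signed (loc C k).
Proof.
case=> I1 _ _ _ Ha Hk; rewrite mem_undup => /mapP [s]; rewrite /saved_for mem_filter.
case/andP => /eqP Ex Hs Ek.
by rewrite -Ex Ek; apply: I1 Ha Hs _; rewrite -Ek.
Qed.

Lemma card_undup_set (s : seq 'I_n) : #|[set k in undup s]| = size (undup s).
Proof. by rewrite cardsE; apply/card_uniqP; exact: undup_uniq. Qed.
End P.

Theorem mainTheorem4 (M : eqType) (n t d : nat) (B : {set 'I_n})
  (HB : #|B| <= t) (Hd : d < n - #|B|) (Hn : 3 * t + 2 * d < n)
  (C : config M n) :
  reachable t d B C ->
  forall (a b i : 'I_n) (sn : nat) (m m' : M),
    a \notin B -> b \notin B ->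
    (m, sn, i) \in ls_delivered (loc C a) ->
    (m', sn, i) \in ls_delivered (loc C b) ->
    m = m'.
Proof.
move=> /Inv_reach HI a b i sn m m' Ha Hb Da Db.
have HI' := HI; case: HI' => _ _ I3 I4.
have Qa := I4 _ _ Ha Da; have Qb := I4 _ _ Hb Db.
set S1 := undup [seq s.1 | s <- saved_for (loc C a) (m, sn, i)] in Qa.
set S2 := undup [seq s.1 | s <- saved_for (loc C b) (m', sn, i)] in Qb.
set A1 := [set k in S1]; set A2 := [set k in S2].
have c1 : #|A1| = nsaved (loc C a) (m, sn, i) by exact: card_undup_set.
have c2 : #|A2| = nsaved (loc C b) (m', sn, i) by exact: card_undup_set.
have cU : #|A1 :|: A2| <= n by apply: leq_trans (max_card _) _; rewrite card_ord.
have cUI := cardsUI A1 A2.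
have : ~~ (A1 :&: A2 \subset B).
  apply/negP => Hsub; have := subset_leq_card Hsub; move=> Hc; have H := leq_add cU (leq_trans Hc HB); rewrite cUI c1 c2 in H; lia.
case/subsetPn => k; rewrite inE !inE => /andP [k1 k2] Hk.
have Hx := signer_signed HI Ha Hk k1.
have Hx' := signer_signed HI Hb Hk k2.
by have [] := I3 _ _ _ Hk Hx Hx' erefl erefl.
Qed.
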